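(* Let $\mathbf K$ be a commutative field, $p,q\in\mathbb N$, and let $A_1,\dots,A_d\in\mathrm{Rec}_{p\times q}(\mathbf K)$ span a recursively closed subspace $\mathcal A=\sum_{j=1}^d\mathbf K A_j$, with saturation level $N$ (which satisfies $N\le\dim(\mathcal A)-1<d$). Then $A_1,\dots,A_d$ are linearly independent if and only if their restrictions $A_1[\mathcal M_{p\times q}^{\le N}],\dots,A_d[\mathcal M_{p\times q}^{\le N}]\in\mathbf K^{\mathcal M_{p\times q}^{\le N}}$ are linearly independent.
   Context: For $p,q,l\in\mathbb N$, $\mathcal M_{p\times q}^l$ is the set of pairs $(U,W)$ of words of common length $l$ with $U\in\{0,\dots,p-1\}^l$, $W\in\{0,\dots,q-1\}^l$; $\mathcal M_{p\times q}=\bigcup_l\mathcal M_{p\times q}^l$ and $\mathcal M_{p\times q}^{\le l}$ is the set of words of length at most $l$. $\mathbf K^{\mathcal M_{p\times q}}$ is the space of functions $\mathcal M_{p\times q}\to\mathbf K$, values written $A[U,W]$; $A[\mathcal S]$ is the restriction of $A$ to a subset $\mathcal S$. Shift maps: $(\rho(S,T)A)[U,W]=A[US,WT]$; a subspace is recursively closed if invariant under all shift maps; $\mathrm{Rec}_{p\times q}(\mathbf K)$ is the set of $A$ whose span of $\{\rho(S,T)A\}$ is finite-dimensional. For a subspace $\mathcal A$, $\mathcal A[\mathcal M_{p\times q}^{\le l}]$ is its image under restriction to $\mathcal M_{p\times q}^{\le l}$; the saturation level of a non-zero $\mathcal A$ is the smallest $N\ge0$ such that the projection $\mathcal A[\mathcal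 M_{p\times q}^{\le N+1}]\to\mathcal A[\mathcal M_{p\times q}^{\le N}]$ is an isomorphism ($\infty$ if none), and the zero space has saturation level $-1$. *)

(* Defs.v *)
From mathcomp Require Import all_boot all_order all_algebra.
Set Implicit Arguments. Unset Strict Implicit. Unset Printing Implicit Defensive.
Import Order.TTheory GRing.Theory Num.Theory.
Local Open Scope ring_scope.

(* A pair (U,W) of words of common length l over {0..p-1} and {0..q-1}
   is encoded as the word [(U_1,W_1); ...; (U_l,W_l)] over 'I_p * 'I_q. *)
Definition word (p q : nat) := seq ('I_p * 'I_q).

Definition series (K : fieldType) (p q : nat) := word p q -> K.

Definition shift (K : fieldType) (p q : nat) (S : word p q) (A : series K p q)
  : series K p q := fun w => A (w ++ S).

Definition in_span (K : fieldType) (p q d : nat) (A : 'I_d -> series K p q)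
  (f : series K p q) : Prop :=
  exists c : 'I_d -> K, forall w, f w = \sum_(j < d) c j * A j w.

Definition is_rec (K : fieldType) (p q : nat) (A : series K p q) : Prop :=
  exists (m : nat) (B : 'I_m -> series K p q), forall S, in_span B (shift S A).

Definition rec_closed (K : fieldType) (p q d : nat) (A : 'I_d -> series K p q)
  : Prop := forall (j : 'I_d) (S : word p q), in_span A (shift S (A j)).

Definition lin_indep_on (K : fieldType) (p q d : nat) (P : word p q -> Prop)
  (A : 'I_d -> series K p q) : Prop :=
  forall c : 'I_d -> K,
    (forall w, P w -> \sum_(j < d) c j * A j w = 0) -> forall j, c j = 0.

Definition lin_indep (K : fieldType) (p q d : nat) (A : 'I_d -> series K p q)
  : Prop := lin_indep_on (fun _ => True) A.

(* The (always surjective, linear) projection A[M^{<= n+1}] -> A[M^{<= n}]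
   is an isomorphism, i.e. has trivial kernel. *)
Definition sat_iso (K : fieldType) (p q d : nat) (A : 'I_d -> series K p q)
  (n : nat) : Prop :=
  forall f, in_span A f ->
    (forall w : word p q, (size w <= n)%N -> f w = 0) ->
    forall w : word p q, (size w <= n.+1)%N -> f w = 0.

Definition is_sat_level (K : fieldType) (p q d : nat) (A : 'I_d -> series K p q)
  (N : int) : Prop :=
  ((forall j w, A j w = 0) /\ N = (-1)%R)
  \/ ((exists j w, A j w != 0) /\
      exists n : nat, N = n%:Z /\ sat_iso A n /\
        forall m : nat, (m < n)%N -> ~ sat_iso A m).

(* Main.v *)
Require Import Defs.
From mathcomp Require Import all_boot all_order all_algebra.
From Stdlib Require Import IndefiniteDescription.
Import Order.TTheory GRing.Theory Num.Theory.
Local Open Scope ring_scope.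

Lemma span_shift (K : fieldType) (p q d : nat) (A : 'I_d -> series K p q) S f :
  rec_closed A -> in_span A f -> in_span A (shift S f).
Proof.
move=> hrc [c hc].
pose H := fun j => constructive_indefinite_description _ (hrc j S).
pose e := fun j => proj1_sig (H j).
have he : forall j w, A j (w ++ S) = \sum_(i < d) e j i * A i w.
  by move=> j w; exact: (proj2_sig (H j) w).
exists (fun i => \sum_(j < d) c j * e j i) => w.
rewrite /shift hc.
under eq_bigr => j _ do rewrite he mulr_sumr.
rewrite exchange_big /=; apply: eq_bigr => i _.
by rewrite mulr_suml; apply: eq_bigr => j _; rewrite mulrA.
Qed.

Lemma sat_all (K : fieldType) (p q d : nat) (A : 'I_d -> series K p q) n :
  rec_closed A -> sat_iso A n ->
  forall k f, in_span A f -> (forall w : word p q, (size w <= n)%N -> f w = 0) ->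
  forall w : word p q, (size w <= n + k)%N -> f w = 0.
Proof.
move=> hrc hs; elim=> [|k IH] f hf h0 w.
  by rewrite addn0; apply: h0.
have h1 := hs f hf h0.
rewrite addnS leq_eqVlt => /orP [/eqP hw|hw]; last by apply: IH.
move: hw; case/lastP: w => [|w' x] //; rewrite size_rcons => /eqP.
rewrite eqSS => /eqP hw'.
have := IH (shift [:: x] f) (@span_shift _ _ _ _ A [:: x] f hrc hf).
rewrite /shift -cats1 => -> //.
  by move=> u hu; apply: h1; rewrite size_cat /= addn1.
by rewrite hw'.
Qed.

Theorem mainTheorem5 (K : fieldType) (p q d : nat) (A : 'I_d -> series K p q)
  (N : int) :
  (forall j, is_rec (A j)) ->
  rec_closed A ->
  is_sat_level A N ->
  (lin_indep A <->
   lin_indep_on (fun w : word p q => (size w)%:Z <= N) A).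
Proof.
move=> _ hrc hN; split; last first.
  by move=> h c hc; apply: h => w _; apply: hc.
move=> hli c hc.
case: hN => [[hz eN]|[_ [n [eN [hs _]]]]]; subst N.
  move=> j; have H1 : forall w : word p q, True -> \sum_(i < d) (1 : K) * A i w = 0.
    by move=> w _; apply: big1 => i _; rewrite hz mulr0.
  by have /eqP := hli _ H1 j; rewrite oner_eq0.
apply: hli => w _.
have hf : in_span A (fun w => \sum_(j < d) c j * A j w) by exists c.
have := @sat_all _ _ _ _ A n hrc hs (size w) _ hf; apply => [u hu|]; last by rewrite leq_addl.
by apply: hc; rewrite lez_nat.
Qed.
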